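(* For every integer $d\ge5$ there exists a graded Artinian level algebra $A=k[x_1,x_2,x_3]/I$ with $\dim_k A_1=3$ whose Hilbert function $(h_0,h_1,\dots)$ satisfies $h_{d-1}>h_d=h_{d+1}=2d+4$.
   Context: $k$ is an infinite field of characteristic $0$; $h_i=\dim_kA_i$. A graded Artinian algebra is level if its socle $\{a:a\mathfrak m=0\}$ ($\mathfrak m$ the maximal homogeneous ideal) is concentrated in a single degree. *)

(* Defs.v *)
From HB Require Import structures.
From mathcomp Require Import all_boot all_order all_algebra.
From mathcomp Require Export mpoly.
Set Implicit Arguments. Unset Strict Implicit. Unset Printing Implicit Defensive.
Import GRing.Theory.
Local Open Scope ring_scope.

(* The polynomial ring S = k[x_1,x_2,x_3] is {mpoly k[3]}; 'X_j, j : 'I_3,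
   are the variables.  An ideal I is given by its membership predicate. *)

Definition homog_ideal (k : fieldType) (I : {mpoly k[3]} -> Prop) : Prop :=
  [/\ I 0,
      (forall p q, I p -> I q -> I (p + q)),
      (forall p q, I p -> I (q * p)) &
      (forall p d, I p -> I (pihomog mdeg d p))].

(* S_i is the finite-dimensional k-space (dhomog 3 k i) of homogeneous
   polynomials of degree i, I_i = I ∩ S_i (a subspace W), and
   dim A_i = dim S_i - dim I_i. *)
Definition hilb (k : fieldType) (I : {mpoly k[3]} -> Prop) (i n : nat) : Prop :=
  exists W : {vspace dhomog 3 k i},
    (forall v : dhomog 3 k i, v \in W <-> I (v : {mpoly k[3]})) /\
    n = (\dim (fullv : {vspace dhomog 3 k i}) - \dim W)%N.

(* A = S/I is Artinian: A_i = 0 for all large i, i.e. every homogeneous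
   polynomial of large degree lies in I. *)
Definition artinian (k : fieldType) (I : {mpoly k[3]} -> Prop) : Prop :=
  exists N : nat, forall (i : nat) (p : {mpoly k[3]}),
    (N <= i)%N -> p \is i.-homog -> I p.

(* A = S/I is level: its socle {a in A : a m = 0} (m = (x1,x2,x3)) is
   concentrated in a single degree s, i.e. every socle element is (the
   class of) a homogeneous element of degree s. *)
Definition level (k : fieldType) (I : {mpoly k[3]} -> Prop) : Prop :=
  exists s : nat, forall p : {mpoly k[3]},
    (forall j : 'I_3, I ('X_j * p)) ->
    exists q : {mpoly k[3]}, q \is s.-homog /\ I (p - q).

(* Main.v *)
Require Import Defs.
From HB Require Import structures.
From mathcomp Require Import all_boot all_order all_algebra.
From mathcomp Require Import mpoly.
From mathcomp Require Import zify.
Set Implicit Arguments. Unset Strict Implicit. Unset Printing Implicit Defensive.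
Import GRing.Theory.

Definition i0 : 'I_3 := @Ordinal 3 0 isT.
Definition i1 : 'I_3 := @Ordinal 3 1 isT.
Definition i2 : 'I_3 := @Ordinal 3 2 isT.

Definition mk (a b c : nat) : 'X_{1..3} :=
  [multinom (nth 0%N [:: a; b; c] i) | i < 3].

Lemma mk0 a b c : mk a b c i0 = a. Proof. by rewrite mnmE. Qed.
Lemma mk1 a b c : mk a b c i1 = b. Proof. by rewrite mnmE. Qed.
Lemma mk2 a b c : mk a b c i2 = c. Proof. by rewrite mnmE. Qed.

Lemma ord3P (P : 'I_3 -> Prop) : P i0 -> P i1 -> P i2 -> forall j, P j.
Proof.
move=> h0 h1 h2 [[|[|[|j]]] hj] //.
- by rewrite (_ : Ordinal hj = i0) //; apply: val_inj.
- by rewrite (_ : Ordinal hj = i1) //; apply: val_inj.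
- by rewrite (_ : Ordinal hj = i2) //; apply: val_inj.
Qed.

Lemma mk_eta (m : 'X_{1..3}) : m = mk (m i0) (m i1) (m i2).
Proof. by apply/mnmP; apply: ord3P; rewrite ?mk0 ?mk1 ?mk2. Qed.

Lemma mk_eq a b c a' b' c' :
  (mk a b c == mk a' b' c') = [&& a == a', b == b' & c == c'].
Proof.
apply/eqP/and3P => [h|[/eqP-> /eqP-> /eqP->]] //.
move: (congr1 (fun m : 'X_{1..3} => m i0) h) (congr1 (fun m : 'X_{1..3} => m i1) h)
  (congr1 (fun m : 'X_{1..3} => m i2) h) => /=.
by rewrite !mk0 !mk1 !mk2 => -> -> ->; rewrite !eqxx.
Qed.

Lemma mkD a b c a' b' c' : (mk a b c + mk a' b' c')%MM = mk (a + a') (b + b') (c + c').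
Proof. by apply/mnmP; apply: ord3P; rewrite mnmDE ?mk0 ?mk1 ?mk2. Qed.

Lemma mkB a b c a' b' c' : (mk a b c - mk a' b' c')%MM = mk (a - a') (b - b') (c - c').
Proof. by apply/mnmP; apply: ord3P; rewrite mnmBE ?mk0 ?mk1 ?mk2. Qed.

Lemma mk_le a b c a' b' c' :
  (mk a b c <= mk a' b' c')%MM = [&& a <= a', b <= b' & c <= c'].
Proof.
apply/mnm_lepP/idP => [h|/and3P[h0 h1 h2]].
  by move: (h i0) (h i1) (h i2); rewrite !mk0 !mk1 !mk2 => -> -> ->.
by apply: ord3P; rewrite ?mk0 ?mk1 ?mk2.
Qed.

Lemma mdeg_mk a b c : mdeg (mk a b c) = (a + b + c)%N.
Proof.
by rewrite mdegE !big_ord_recr big_ord0 /= !mnmE /= add0n.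
Qed.

Lemma mkU0 : U_(i0)%MM = mk 1 0 0.
Proof. by apply/mnmP; apply: ord3P; rewrite mnm1E ?mk0 ?mk1 ?mk2. Qed.

Local Open Scope ring_scope.

Section Gen.
Variable k : fieldType.
Implicit Types (p q r : {mpoly k[3]}) (m g : 'X_{1..3}).

Definition PG (G : seq 'X_{1..3}) p := forall q, \sum_(g <- G) (q * p)@_g = 0.

Lemma coef_pihomog p e m :
  (pihomog mdeg e p)@_m = if mdeg m == e then p@_m else 0.
Proof.
rewrite pihomogE raddf_sum big_mkcond /=.
case: ifP => hm; [rewrite {3}(mpolyE p) raddf_sum /=; apply: eq_bigr|apply: big1]
  => m' _; case: ifP => h' //; rewrite mcoeffZ mcoeffX;
  case: (m' =P m) => [e'|]; rewrite ?mulr0 //; by rewrite e' hm in h'.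
Qed.

Lemma coefM_homog_small q p e g :
  p \is e.-homog -> (mdeg g < e)%N -> (q * p)@_g = 0.
Proof.
move=> hp hg; rewrite mcoeffM big1 // => kk /eqP hk.
rewrite (dhomog_nemf_coeff hp) ?mulr0 //.
apply/eqP => he; move: hg; rewrite hk mdegD he; lia.
Qed.

Lemma coefM_pihomog q p e g : (e <= mdeg g)%N ->
  (q * pihomog mdeg e p)@_g = (pihomog mdeg (mdeg g - e) q * p)@_g.
Proof.
move=> he; rewrite !mcoeffM; apply: eq_bigr => kk /eqP hk.
rewrite !coef_pihomog.
have -> : (mdeg kk.1 == mdeg g - e)%N = (mdeg kk.2 == e).
  have hd : mdeg g = (mdeg kk.1 + mdeg kk.2)%N by rewrite {1}hk mdegD.
  apply/eqP/eqP; lia.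
by case: ifP; rewrite ?mulr0 ?mul0r.
Qed.

Variable s : nat.
Variable G : seq 'X_{1..3}.
Hypothesis HG : forall g, g \in G -> mdeg g = s.

Lemma PG_0 : PG G 0.
Proof. by move=> q; rewrite mulr0 big1 // => g _; rewrite mcoeff0. Qed.

Lemma PG_D p p' : PG G p -> PG G p' -> PG G (p + p').
Proof.
move=> h h' q; rewrite (eq_bigr (fun g => (q * p)@_g + (q * p')@_g)).
  by rewrite big_split /= h h' addr0.
by move=> g _; rewrite mulrDr mcoeffD.
Qed.

Lemma PG_M p r : PG G p -> PG G (r * p).
Proof. by move=> h q; rewrite mulrA; exact: h. Qed.

Lemma PG_high p e : p \is e.-homog -> (s < e)%N -> PG G p.
Proof.
move=> hp he q; rewrite big_seq big1 // => g hg.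
by apply: coefM_homog_small hp _; rewrite HG.
Qed.

Lemma PG_pihomog p e : PG G p -> PG G (pihomog mdeg e p).
Proof.
move=> h q; case: (leqP e s) => hes.
  rewrite big_seq (eq_bigr (fun g => (pihomog mdeg (s - e) q * p)@_g)).
    by rewrite -big_seq h.
  by move=> g hg; rewrite coefM_pihomog HG.
exact: (PG_high (pihomogP _ _ _) hes q).
Qed.

Lemma PG_level p : (forall j : 'I_3, PG G ('X_j * p)) ->
  PG G (p - pihomog mdeg s p).
Proof.
move=> h q.
have key : forall m, \sum_(g <- G) ('X_[m] * (p - pihomog mdeg s p))@_g = 0.
  move=> m; case: (m =P 0%MM) => [->|hm].
    rewrite mpolyX0 big_seq big1 // => g hg.
    by rewrite mul1r mcoeffB coef_pihomog HG // eqxx subrr.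
  case: (pickP (fun j : 'I_3 => m j != 0%N)) => [j hj|hnone]; last first.
    by exfalso; apply: hm; apply/mnmP => j; move/negbFE/eqP: (hnone j) => ->; rewrite mnmE.
  have hle : (U_(j) <= m)%MM by rewrite lep1mP.
  rewrite -(submK hle) mpolyXD -mulrA mulrBr (eq_bigr (fun g =>
     ('X_[m - U_(j)] * ('X_j * p))@_g - ('X_[m - U_(j)] * ('X_j * pihomog mdeg s p))@_g)).
    rewrite sumrB (h j) sub0r big_seq big1 ?oppr0 // => g hg.
    apply: (@coefM_homog_small _ _ (1 + s)%N); last by rewrite HG.
    by apply: dhomogM; [rewrite dhomogX; apply/eqP; exact: mdeg1|apply: pihomogP].
  by move=> g _; rewrite mulrBr mcoeffB.
rewrite (mpolyE q) mulr_suml.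
rewrite (eq_bigr (fun g => \sum_(m <- msupp q) q@_m * ('X_[m] * (p - pihomog mdeg s p))@_g)).
  rewrite exchange_big big1 //= => m _; by rewrite -mulr_sumr key mulr0.
by move=> g _; rewrite raddf_sum; apply: eq_bigr => m _; rewrite -scalerAl; exact: mcoeffZ.
Qed.

End Gen.

Definition nonyz (m : 'X_{1..3}) := (m i1 == 0%N) || (m i2 == 0%N).

Definition Iset (k : fieldType) (s : nat) (F : seq 'X_{1..3}) (p : {mpoly k[3]}) : Prop :=
  PG F p /\ (forall g, mdeg g = s -> nonyz g -> PG [:: g] p).

Section IsetProps.
Variable k : fieldType.
Variable s : nat.
Variable F : seq 'X_{1..3}.
Hypothesis HF : forall g, g \in F -> mdeg g = s.

Lemma Iset_ideal : homog_ideal (@Iset k s F).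
Proof.
have H1 : forall g : 'X_{1..3}, mdeg g = s -> forall g0, g0 \in [:: g] -> mdeg g0 = s.
  by move=> g hg g0; rewrite mem_seq1 => /eqP ->.
split.
- by split; [apply: PG_0 | move=> g _ _; apply: PG_0].
- move=> p q [h1 h2] [h1' h2']; split; first exact: PG_D.
  by move=> g hg hn; apply: PG_D; [apply: h2|apply: h2'].
- move=> p q [h1 h2]; split; first exact: PG_M.
  by move=> g hg hn; apply: PG_M; apply: h2.
- move=> p e [h1 h2]; split; first exact: (PG_pihomog HF).
  by move=> g hg hn; apply: (PG_pihomog (H1 g hg)); apply: h2.
Qed.

Lemma Iset_artinian : artinian (@Iset k s F).
Proof.
exists s.+1 => i p hi hp; split; first exact: (PG_high HF hp).
move=> g hg hn; apply: (PG_high _ hp hi).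
by move=> g0; rewrite mem_seq1 => /eqP ->.
Qed.

Lemma Iset_level : level (@Iset k s F).
Proof.
exists s => p h; exists (pihomog mdeg s p); split; first exact: pihomogP.
split.
  by apply: (PG_level HF) => j; case: (h j).
move=> g hg hn; apply: (PG_level (s := s)).
  by move=> g0; rewrite mem_seq1 => /eqP ->.
by move=> j; case: (h j) => _ /(_ g hg hn).
Qed.

End IsetProps.

Section Hilb.
Variable k : fieldType.
Implicit Types (v : {mpoly k[3]}).

Definition psi (F : seq 'X_{1..3}) (b : 'X_{1..3}) v : k :=
  \sum_(g <- F) (if (b <= g)%MM then v@_(g - b) else 0).

Lemma psiD F b : {morph psi F b : x y / x + y}.
Proof.
move=> x y; rewrite /psi -big_split; apply: eq_bigr => g _.
by case: ifP => _ /=; rewrite ?mcoeffD ?addr0.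
Qed.

Lemma psi0 F b : psi F b 0 = 0.
Proof. by rewrite /psi big1 // => g _; case: ifP; rewrite ?mcoeff0. Qed.

Lemma psiZ F b c v : psi F b (c *: v) = c * psi F b v.
Proof.
rewrite /psi mulr_sumr; apply: eq_bigr => g _.
by case: ifP => _; rewrite ?mcoeffZ ?mulr0.
Qed.

Lemma psi_sum F b (I : Type) (r : seq I) (P : pred I) (f : I -> {mpoly k[3]}) :
  psi F b (\sum_(x <- r | P x) f x) = \sum_(x <- r | P x) psi F b (f x).
Proof. exact: (big_morph _ (psiD F b) (psi0 F b)). Qed.

Lemma lem_add (b m : 'X_{1..3}) : (b <= b + m)%MM.
Proof. by apply/mnm_lepP => j; rewrite mnmDE leq_addr. Qed.

Lemma mdeg_sub (b g : 'X_{1..3}) : (b <= g)%MM -> mdeg (g - b) = (mdeg g - mdeg b)%N.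
Proof. by move=> h; rewrite -{2}(submK h) mdegD addnK. Qed.

Lemma coefXM b v g : ('X_[b] * v)@_g = if (b <= g)%MM then v@_(g - b) else 0.
Proof.
case: ifP => hb.
  by rewrite -{1}(submK hb) addmC -commr_mpolyX mcoeffMX.
apply/eqP; apply: contraFT hb => hnz.
have : g \in msupp (v * 'X_[b]) by rewrite mcoeff_msupp commr_mpolyX.
by rewrite (perm_mem (msuppMX v b)) => /mapP [m' _ ->]; exact: lem_add.
Qed.

Lemma PG_homog_iff (G : seq 'X_{1..3}) s i v :
  (forall g, g \in G -> mdeg g = s) -> v \is i.-homog ->
  PG G v <-> (forall b, (mdeg b + i = s)%N -> psi G b v = 0).
Proof.
move=> HG hv; split => [h b hb | h q].
  by rewrite /psi -[RHS](h 'X_[b]); apply: eq_bigr => g _; rewrite coefXM.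
rewrite (mpolyE q) mulr_suml.
rewrite (eq_bigr (fun g => \sum_(m <- msupp q) q@_m * ('X_[m] * v)@_g)); last first.
  by move=> g _; rewrite raddf_sum; apply: eq_bigr => m _; rewrite -scalerAl; exact: mcoeffZ.
rewrite exchange_big big1 //= => m _; rewrite -mulr_sumr.
case: (eqVneq (mdeg m + i)%N s) => hm.
  rewrite (eq_bigr (fun g => if (m <= g)%MM then v@_(g - m) else 0)); last first.
    by move=> g _; rewrite coefXM.
  by move: (h m hm); rewrite /psi => ->; rewrite mulr0.
rewrite big_seq big1 ?mulr0 // => g hg; rewrite coefXM; case: ifP => // hmg.
apply: (dhomog_nemf_coeff hv).
suff : (mdeg (g - m) != i) by [].
have hle : (mdeg m <= mdeg g)%N by rewrite -(submK hmg) mdegD leq_addl.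
rewrite mdeg_sub //; move: hle hm; rewrite (HG g hg) => hle /eqP hm; apply/eqP; lia.
Qed.

Lemma mono_iff s i v : (i <= s)%N -> v \is i.-homog ->
  (forall g, mdeg g = s -> nonyz g -> PG [:: g] v) <->
  (forall a, mdeg a = i -> nonyz a -> v@_a = 0).
Proof.
move=> his hv; split => [h a ha hn | h g hg hn].
  have hb : (mk (s - i) 0 0 <= a + mk (s - i) 0 0)%MM by rewrite addmC lem_add.
  have h1 : mdeg (a + mk (s - i) 0 0) = s by rewrite mdegD mdeg_mk ha; lia.
  have h2 : nonyz (a + mk (s - i) 0 0).
    by move: hn; rewrite /nonyz !mnmDE !mk1 !mk2 !addn0.
  by move: (h _ h1 h2 'X_[mk (s - i) 0 0]); rewrite big_seq1 coefXM hb addmK.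
apply/(@PG_homog_iff _ s i) => //.
  by move=> g0; rewrite mem_seq1 => /eqP ->.
move=> b hb; rewrite /psi big_seq1; case: ifP => // hbg.
apply: h; first by rewrite mdeg_sub // hg; lia.
by move: hn; rewrite /nonyz !mnmBE => /orP [/eqP -> | /eqP ->]; rewrite ?sub0n eqxx ?orbT.
Qed.

End Hilb.

Definition nz (i j : nat) : 'X_{1..3} :=
  if (j <= i)%N then mk (i - j) j 0 else mk (i - (j - i)) 0 (j - i).

Lemma nz_deg i j : (j < 2 * i + 1)%N -> mdeg (nz i j) = i.
Proof. by rewrite /nz; case: ifP => h hj; rewrite mdeg_mk; lia. Qed.

Lemma nz_nonyz i j : nonyz (nz i j).
Proof. by rewrite /nz /nonyz; case: ifP => _; rewrite ?mk1 ?mk2 eqxx ?orbT. Qed.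

Lemma nz_inj i j j' : (j < 2*i+1)%N -> (j' < 2*i+1)%N -> nz i j = nz i j' -> j = j'.
Proof.
rewrite /nz => hj hj'; case: ifP => h1; case: ifP => h2 /eqP;
  rewrite mk_eq => /and3P [/eqP e1 /eqP e2 /eqP e3]; lia.
Qed.

Lemma nz_surj i a : mdeg a = i -> nonyz a -> exists2 j, (j < 2*i+1)%N & a = nz i j.
Proof.
rewrite [a]mk_eta mdeg_mk /nonyz mk1 mk2.
move: (a i0) (a i1) (a i2) => x y z hd hn.
case: (eqVneq z 0%N) => hz0.
  exists y; first lia.
  rewrite /nz; have -> : (y <= i)%N by lia.
  apply/eqP; rewrite mk_eq; apply/and3P; split; apply/eqP; lia.
have hy0 : y = 0%N by case/orP: hn => /eqP // e; rewrite e eqxx in hz0.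
exists (i + z)%N; first lia.
rewrite /nz; have -> : (i + z <= i)%N = false by lia.
apply/eqP; rewrite mk_eq; apply/and3P; split; apply/eqP; lia.
Qed.

Section HilbMain.
Variable k : fieldType.

Lemma hilb_gen (s i r : nat) (F : seq 'X_{1..3}) (bs ps : 'I_r -> 'X_{1..3}) :
  (forall g, g \in F -> mdeg g = s) ->
  (i <= s)%N ->
  (forall t, mdeg (bs t) + i = s)%N ->
  (forall t, mdeg (ps t) = i) ->
  (forall t, ~~ nonyz (ps t)) ->
  (forall t t', psi F (bs t) ('X_[ps t'] : {mpoly k[3]}) = (t == t')%:R) ->
  (forall b, (mdeg b + i = s)%N -> (exists t, b = bs t) \/
        (forall g, g \in F -> (b <= g)%MM -> nonyz (g - b))) ->
  hilb (@Iset k s F) i (2 * i + 1 + r).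
Proof.
move=> HF his Hb Hpd Hpn Hd Hcov.
pose N := (2 * i + 1)%N.
pose phi (v : dhomog 3 k i) : 'rV[k]_(N + r) := \row_j
  (match split j with inl a => (v : {mpoly k[3]})@_(nz i a)
                    | inr t => psi F (bs t) (v : {mpoly k[3]}) end).
have lin : linear phi.
  move=> c u v; apply/matrixP => x j; rewrite !mxE.
  by case: (split j) => [a|t]; rewrite linearP /= ?mcoeffD ?mcoeffZ ?psiD ?psiZ.
pose f : {linear dhomog 3 k i -> 'rV[k]_(N + r)} :=
  HB.pack phi (GRing.isLinear.Build _ _ _ _ phi lin).
exists (lker (linfun f)); split.
  move=> v; rewrite memv_ker lfunE /=.
  have hv := dhomog_is_dhomog v.
  split.
    move/eqP/matrixP => hf.
    have hA : forall a : 'I_N, (v : {mpoly k[3]})@_(nz i a) = 0.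
      by move=> a; move: (hf 0 (unsplit (inl a))); rewrite !mxE unsplitK.
    have hT : forall t, psi F (bs t) (v : {mpoly k[3]}) = 0.
      by move=> t; move: (hf 0 (unsplit (inr t))); rewrite !mxE unsplitK.
    have hA' : forall a, mdeg a = i -> nonyz a -> (v : {mpoly k[3]})@_a = 0.
      by move=> a ha hn; case: (nz_surj ha hn) => j hj ->; exact: (hA (Ordinal hj)).
    split; last by apply/(@mono_iff k s i _ his hv).
    apply/(@PG_homog_iff k F s i _ HF hv) => b hb; case: (Hcov b hb) => [[t ->]|hc] //.
    rewrite /psi big_seq big1 // => g hg; case: ifP => // hbg.
    apply: hA'; last exact: hc.
    by rewrite mdeg_sub // HF //; lia.
  case=> hPG hmono; apply/eqP/matrixP => x j; rewrite !mxE.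
  case: (split j) => [a|t].
    apply: (proj1 (@mono_iff k s i _ his hv) hmono); last exact: nz_nonyz.
    by apply: nz_deg.
  exact: (proj1 (@PG_homog_iff k F s i _ HF hv) hPG).
set L := linfun f.
have himg : (limg L = fullv)%VS.
  apply/eqP; rewrite eqEsubv subvf /=; apply/subvP => w _.
  pose u : {mpoly k[3]} := \sum_(a < N) w 0 (lshift r a) *: 'X_[nz i a].
  pose pw : {mpoly k[3]} := u + \sum_(t < r) (w 0 (rshift N t) - psi F (bs t) u) *: 'X_[ps t].
  have hu : u \is i.-homog.
    by apply: rpred_sum => a _; apply: rpredZ; rewrite dhomogX; apply/eqP; apply: nz_deg.
  have hpw : pw \is i.-homog.
    apply: rpredD => //; apply: rpred_sum => t _; apply: rpredZ.
    by rewrite dhomogX; apply/eqP; apply: Hpd.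
  have -> : w = L (DHomog hpw).
    rewrite lfunE /=; apply/matrixP => x j; rewrite !mxE ord1.
    rewrite -(splitK j); case: (split j) => [a|t]; rewrite unsplitK /=.
    - rewrite /pw mcoeffD raddf_sum /= (bigD1 a) //= mcoeffZ mcoeffX eqxx mulr1.
      rewrite big1 ?addr0; last first.
        move=> a' ha'; rewrite mcoeffZ mcoeffX; case: eqP => [e|]; last by rewrite mulr0.
        by exfalso; move/eqP: ha'; apply; apply: val_inj; exact: (nz_inj (ltn_ord a') (ltn_ord a) e).
      rewrite raddf_sum big1 ?addr0 //= => t _; rewrite mcoeffZ mcoeffX.
      case: eqP => [e|]; last by rewrite mulr0.
      by move: (Hpn t); rewrite e nz_nonyz.
    - rewrite /pw psiD [psi _ _ (\sum_(t0 < r) _)]psi_sum (bigD1 t) //= psiZ Hd eqxx mulr1.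
      rewrite big1 ?addr0; first by rewrite addrC subrK.
      by move=> t' ht'; rewrite psiZ Hd eq_sym (negbTE ht') mulr0.
  by apply: memv_img; exact: memvf.
have := limg_ker_dim L fullv; rewrite capfv himg => <-.
rewrite addKn dimvf.
by rewrite /dim /= mul1n.
Qed.

End HilbMain.

Lemma psi_X (k : fieldType) F b p :
  psi F b ('X_[p] : {mpoly k[3]}) = \sum_(g <- F) ((b + p)%MM == g)%:R.
Proof.
rewrite /psi; apply: eq_bigr => g _; rewrite mcoeffX; case: ifP => hb.
  have -> : (p == (g - b)%MM) = ((b + p)%MM == g).
    by apply/eqP/eqP => [->|<-]; [rewrite addmC submK | rewrite addmC addmK].
  by [].
case: eqP => // e; by rewrite -e lem_add in hb.
Qed.

Ltac dec_nat :=
  repeat match goal with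
  | |- context [ (?a == ?b :> nat) ] =>
      first [ have -> : (a == b) = true by apply/eqP; lia
            | have -> : (a == b) = false by apply/eqP; lia ]
  | |- context [ (?a <= ?b)%N ] =>
      first [ have -> : (a <= b)%N = true by apply/idP; lia
            | have -> : (a <= b)%N = false by apply/negP; lia ]
  end.

Definition Fd d : seq 'X_{1..3} := [:: mk 2 2 (d - 3); mk 0 d 1; mk 0 1 d].

Lemma Fd_deg d : (3 <= d)%N -> forall g, g \in Fd d -> mdeg g = d.+1.
Proof.
move=> hd g; rewrite !inE => /or3P [] /eqP ->; rewrite mdeg_mk; lia.
Qed.

Definition bs3 (t : 'I_3) := nth 0%MM [:: mk 1 0 0; mk 0 1 0; mk 0 0 1] t.
Definition ps3 d (t : 'I_3) := nth 0%MM [:: mk 1 2 (d - 3); mk 2 1 (d - 3); mk 2 2 (d - 4)] t.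


Definition bs6 (t : 'I_6) :=
  nth 0%MM [:: mk 2 0 0; mk 1 1 0; mk 1 0 1; mk 0 2 0; mk 0 1 1; mk 0 0 2] t.
Definition ps6 d (t : 'I_6) :=
  nth 0%MM [:: mk 0 2 (d - 3); mk 1 1 (d - 3); mk 1 2 (d - 4); mk 0 (d - 2) 1;
               mk 2 1 (d - 4); mk 0 1 (d - 2)] t.

Lemma mono_cases (b : 'X_{1..3}) (P : 'X_{1..3} -> Prop) :
  (forall x y z, P (mk x y z)) -> P b.
Proof. by move=> h; rewrite [b]mk_eta; apply: h. Qed.

Section Inst.
Variable k : fieldType.
Variable d : nat.
Hypothesis hd : (5 <= d)%N.

Lemma hilb_top : hilb (@Iset k d.+1 (Fd d)) d.+1 (2 * d + 4).
Proof.
have := @hilb_gen k d.+1 d.+1 1 (Fd d) (fun _ => mk 0 0 0) (fun _ => mk 2 2 (d - 3))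
  (Fd_deg (ltnW (ltnW hd))) (leqnn _).
rewrite (_ : (2 * d.+1 + 1 + 1 = 2 * d + 4)%N); last by lia.
apply.
- by move=> t; rewrite mdeg_mk.
- by move=> t; rewrite mdeg_mk; lia.
- by move=> t; rewrite /nonyz mk1 mk2; dec_nat.
- move=> t t'; rewrite !ord1 eqxx psi_X /Fd !big_cons big_nil !mkD !mk_eq /=.
  by dec_nat; rewrite /= ?addr0.
- move=> b; rewrite [b]mk_eta mdeg_mk; move: (b i0) (b i1) (b i2) => x y z h; left; exists ord0.
  apply/eqP; rewrite mk_eq; apply/and3P; split; apply/eqP; lia.
Qed.

Lemma hilb_mid : hilb (@Iset k d.+1 (Fd d)) d (2 * d + 4).
Proof.
have := @hilb_gen k d.+1 d 3 (Fd d) bs3 (ps3 d)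
  (Fd_deg (ltnW (ltnW hd))) (leqnSn _).
rewrite (_ : (2 * d + 1 + 3 = 2 * d + 4)%N); last by lia.
apply.
- by case=> [[|[|[|?]]] ?] //; rewrite /bs3 /= mdeg_mk.
- by case=> [[|[|[|?]]] ?] //; rewrite /ps3 /= mdeg_mk; lia.
- by case=> [[|[|[|?]]] ?] //; rewrite /ps3 /nonyz /= mk1 mk2; dec_nat.
- move=> t t'; rewrite psi_X /Fd !big_cons big_nil.
  case: t => [[|[|[|?]]] ht] //; case: t' => [[|[|[|?]]] ht'] //;
    rewrite /bs3 /ps3 /= !mkD !mk_eq /=; dec_nat; rewrite /= ?addr0 ?add0r //.
- move=> b; rewrite [b]mk_eta mdeg_mk; move: (b i0) (b i1) (b i2) => x y z h; left.
  case: x h => [|[|x]]; case: y => [|[|y]]; case: z => [|[|z]] => h;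
   try (exfalso; lia).
  + by exists (@Ordinal 3 2 isT).
  + by exists (@Ordinal 3 1 isT).
  + by exists (@Ordinal 3 0 isT).
Qed.

Lemma hilb_low : hilb (@Iset k d.+1 (Fd d)) d.-1 (2 * d + 5).
Proof.
have := @hilb_gen k d.+1 d.-1 6 (Fd d) bs6 (ps6 d)
  (Fd_deg (ltnW (ltnW hd))) (leq_trans (leq_pred _) (leqnSn _)).
rewrite (_ : (2 * d.-1 + 1 + 6 = 2 * d + 5)%N); last by lia.
apply.
- by case=> [[|[|[|[|[|[|?]]]]]] ?] //; rewrite /bs6 /= mdeg_mk; lia.
- by case=> [[|[|[|[|[|[|?]]]]]] ?] //; rewrite /ps6 /= mdeg_mk; lia.
- by case=> [[|[|[|[|[|[|?]]]]]] ?] //; rewrite /ps6 /nonyz /= mk1 mk2; dec_nat.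
- move=> t t'; rewrite psi_X /Fd !big_cons big_nil.
  case: t => [[|[|[|[|[|[|?]]]]]] ht] //; case: t' => [[|[|[|[|[|[|?]]]]]] ht'] //;
    rewrite /bs6 /ps6 /= !mkD !mk_eq /=; dec_nat; rewrite /= ?addr0 ?add0r //.
- move=> b; rewrite [b]mk_eta mdeg_mk; move: (b i0) (b i1) (b i2) => x y z h; left.
  case: x h => [|[|[|x]]]; case: y => [|[|[|y]]]; case: z => [|[|[|z]]] => h;
   try (exfalso; lia).
  + by exists (@Ordinal 6 5 isT).
  + by exists (@Ordinal 6 4 isT).
  + by exists (@Ordinal 6 3 isT).
  + by exists (@Ordinal 6 2 isT).
  + by exists (@Ordinal 6 1 isT).
  + by exists (@Ordinal 6 0 isT).
Qed.

Lemma hilb_one : hilb (@Iset k d.+1 (Fd d)) 1 3.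
Proof.
have := @hilb_gen k d.+1 1 0 (Fd d) (fun _ => 0%MM) (fun _ => 0%MM)
  (Fd_deg (ltnW (ltnW hd))) isT.
apply; try by case.
move=> b hb; right => g hg hbg.
have hdeg : mdeg (g - b) = 1%N by rewrite mdeg_sub // (Fd_deg (ltnW (ltnW hd)) hg); lia.
move: (g - b)%MM hdeg => m; rewrite [m]mk_eta mdeg_mk /nonyz mk1 mk2.
move: (m i0) (m i1) (m i2) => x y z h.
by case: y h => [|y]; case: z => [|z] //= h; lia.
Qed.

End Inst.

Theorem proposition4p9 (k : fieldType) (char0 : [pchar k] =i pred0)
  (d : nat) (hd : (5 <= d)%N) :
  exists I : {mpoly k[3]} -> Prop,
    [/\ homog_ideal I, artinian I, level I, hilb I 1 3 &
      exists a : nat,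
        [/\ hilb I d.-1 a, hilb I d (2 * d + 4), hilb I d.+1 (2 * d + 4)
          & (2 * d + 4 < a)%N]].
Proof.
have HF := Fd_deg (ltnW (ltnW hd)).
exists (@Iset k d.+1 (Fd d)); split.
- exact: (@Iset_ideal k _ _ HF).
- exact: (@Iset_artinian k _ _ HF).
- exact: (@Iset_level k _ _ HF).
- exact: hilb_one.
- exists (2 * d + 5)%N; split.
  + exact: hilb_low.
  + exact: hilb_mid.
  + exact: hilb_top.
  + by rewrite ltn_add2l.
Qed.
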